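(* Consider the secure distributed linearly separable computation problem with $\mathsf K_{\rm c}=1$ and $\mathsf M=\frac{\mathsf K}{\mathsf N}(\mathsf N-\mathsf N_{\rm r}+1)$, and any secure scheme with assignment $\mathbf Z=(\mathcal Z_1,\dots,\mathcal Z_{\mathsf N})$ and randomness size $\eta$. If there exists an ordered set of servers $\mathbf s=(s_1,\dots,s_{|\mathbf s|})$ in $[\mathsf N]$ such that $\mathcal Z_{s_i}\setminus(\mathcal Z_{s_1}\cup\cdots\cup\mathcal Z_{s_{i-1}})\neq\emptyset$ for all $i\in[|\mathbf s|]$, then $\eta\ge|\mathbf s|-1$.
   Context: Problem setting. $\mathsf K,\mathsf N,\mathsf N_{\rm r},\mathsf M$ are positive integers with $\mathsf N_{\rm r}\le \mathsf N$ and $\mathsf N$ dividing $\mathsf K$. Fix a prime power $\mathsf q$ and a positive integer $\mathsf L$. Datasets $D_1,\dots,D_{\mathsf K}$ are independent; the message $W_k=f_k(D_k)\in\mathbb F_{\mathsf q}^{\mathsf L}$, and $W_1,\dots,W_{\mathsf K}$ are mutually independent, each uniform over $\mathbb F_{\mathsf q}^{\mathsf L}$. The user wants $W_1+\cdots+W_{\mathsf K}$. A secure scheme consists of: an assignment $\mathcal Z_n\subseteq[\mathsf K]$, $|\mathcal Z_n|\le\mathsf M$, $n\in[\mathsf N]$; a random variable $Q$ on a finite set, independent of $(D_1,\dots,D_{\mathsf K})$, given to every server but not to the user; transmissions $X_n=\psi_n(\{W_k:k\in\mathcal Z_n\},Q)\in\mathbb F_{\mathsf q}^{\mathsf T_n}$;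 decodability: for every $\mathcal A\subseteq[\mathsf N]$ with $|\mathcal A|=\mathsf N_{\rm r}$, $W_1+\cdots+W_{\mathsf K}$ is a function of $\{X_n:n\in\mathcal A\}$; security: $I(W_1,\dots,W_{\mathsf K};X_1,\dots,X_{\mathsf N}\mid W_1+\cdots+W_{\mathsf K})=0$. The randomness size is $\eta=H(Q)/\mathsf L$, with entropy measured in $\mathsf q$-ary units. (It is known that when $\mathsf M=\frac{\mathsf K}{\mathsf N}(\mathsf N-\mathsf N_{\rm r}+1)$, in any such decodable scheme each dataset is assigned to exactly $\mathsf N-\mathsf N_{\rm r}+1$ servers and each server receives exactly $\mathsf M$ datasets.) *)

(* Defs.v *)
From HB Require Import structures.
From mathcomp Require Import all_boot all_order all_algebra.
From mathcomp Require Import reals exp.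
Set Implicit Arguments. Unset Strict Implicit. Unset Printing Implicit Defensive.
Import Order.TTheory GRing.Theory Num.Theory.
Local Open Scope ring_scope.

Section InfoTheory.
Variables (R : realType) (Omega : finType) (P : Omega -> R).

Definition prob (A : pred Omega) : R := \sum_(w : Omega | A w) P w.

Definition entropy (b : nat) (V : eqType) (Y : Omega -> V) : R :=
  - \sum_(v <- undup [seq Y w | w <- enum Omega])
      prob (fun w => Y w == v) * (ln (prob (fun w => Y w == v)) / ln b%:R).

Definition cond_mutual_info (b : nat) (A B C : eqType)
    (X : Omega -> A) (Y : Omega -> B) (Z : Omega -> C) : R :=
  entropy b (fun w => (X w, Z w)) + entropy b (fun w => (Y w, Z w))
  - entropy b (fun w => (X w, Y w, Z w)) - entropy b Z.
End InfoTheory.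

(* Sample space: all messages W = (W_1,...,W_K), W_k in F^L (row vectors),
   together with the shared randomness Q in a finite set T.
   W is uniform on (F^L)^K and independent of Q, whose law is pQ. *)
Section Model.
Variables (R : realType) (F : finFieldType) (L K N : nat) (T : finType).

Definition msgs := {ffun 'I_K -> 'rV[F]_L}.
Definition Omega := (msgs * T)%type.

Definition joint_prob (pQ : T -> R) (o : Omega) : R :=
  pQ o.2 / (#|{: msgs}|)%:R.

Definition W_of (o : Omega) : msgs := o.1.
Definition Q_of (o : Omega) : T := o.2.
Definition sumW (o : Omega) : 'rV[F]_L := \sum_(k < K) o.1 k.

(* X_n = psi_n({W_k : k in Z_n}, Q): psi_n only depends on the messages in Z_n *)
Definition depends_only_on (Z : 'I_N -> {set 'I_K}) (Tn : 'I_N -> nat)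
    (psi : forall n : 'I_N, msgs -> T -> 'rV[F]_(Tn n)) : Prop :=
  forall (n : 'I_N) (w w' : msgs) (t : T),
    (forall k, k \in Z n -> w k = w' k) -> psi n w t = psi n w' t.

Definition all_X (Tn : 'I_N -> nat)
    (psi : forall n : 'I_N, msgs -> T -> 'rV[F]_(Tn n)) (o : Omega)
    : {dffun forall n : 'I_N, 'rV[F]_(Tn n)} :=
  [ffun n => psi n o.1 o.2].

Definition decodable (pQ : T -> R) (Nr : nat) (Tn : 'I_N -> nat)
    (psi : forall n : 'I_N, msgs -> T -> 'rV[F]_(Tn n)) : Prop :=
  forall A : {set 'I_N}, #|A| = Nr ->
    exists g : (forall n : 'I_N, 'rV[F]_(Tn n)) -> 'rV[F]_L,
      forall o : Omega, 0 < joint_prob pQ o ->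
        sumW o = g (fun n => if n \in A then psi n o.1 o.2 else 0).

Definition secure (pQ : T -> R) (Tn : 'I_N -> nat)
    (psi : forall n : 'I_N, msgs -> T -> 'rV[F]_(Tn n)) : Prop :=
  cond_mutual_info (joint_prob pQ) #|F| W_of (all_X psi) sumW = 0.

Definition randomness_size (pQ : T -> R) : R :=
  entropy (joint_prob pQ) #|F| Q_of / L%:R.

Definition new_data_seq (Z : 'I_N -> {set 'I_K}) (s : seq 'I_N) : Prop :=
  forall (p r : seq 'I_N) (x : 'I_N), s = p ++ x :: r ->
    Z x :\: \bigcup_(j <- p) Z j != set0.
End Model.

(* Main.v *)
Require Import Defs.
From HB Require Import structures.
From mathcomp Require Import all_boot all_order all_algebra.
From mathcomp Require Import reals exp.
From mathcomp Require Import zify lra.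
From Stdlib Require Import FunctionalExtensionality.
Import Order.TTheory GRing.Theory Num.Theory.
Local Open Scope ring_scope.

Module Helpers.
Set Implicit Arguments. Unset Strict Implicit. Unset Printing Implicit Defensive.
Section Info.
Variables (R : realType) (Omega : finType) (P : Omega -> R).
Hypothesis P_ge0 : forall w, 0 <= P w.

Definition phi (p : R) := p * ln p.

Lemma prob_ge0 A : 0 <= prob P A.
Proof. by apply: sumr_ge0 => w _; apply: P_ge0. Qed.

Lemma entropyE (b : nat) (V : finType) (Y : Omega -> V) :
  entropy P b Y = - (\sum_(v : V) phi (prob P (fun w => Y w == v))) / ln b%:R.
Proof.
rewrite /entropy mulNr; congr (- _).
rewrite big_uniq ?undup_uniq // mulr_suml.
rewrite [RHS](bigID (fun v => v \in undup [seq Y w | w <- enum Omega])) /=.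
rewrite [X in _ = _ + X]big1 ?addr0.
  by apply: eq_bigr => v _; rewrite /phi mulrA.
move=> v vn; rewrite /prob big_pred0 ?mul0r ?/phi ?mul0r //.
move=> w; apply/negP => /eqP Yw; move: vn; rewrite mem_undup -Yw.
by rewrite map_f ?mem_enum.
Qed.

Lemma phi_le (p S : R) : 0 <= p -> p <= S -> phi p <= p * ln S.
Proof.
move=> p0 pS; have [->|pp] := eqVneq p 0; first by rewrite /phi !mul0r.
have p_gt0 : 0 < p by rewrite lt_def pp.
by rewrite /phi ler_wpM2l // ler_ln ?posrE ?p_gt0 ?(lt_le_trans p_gt0 pS).
Qed.

Lemma phi_sum_le (I : finType) (Q : pred I) (p : I -> R) :
  (forall i, 0 <= p i) ->
  \sum_(i | Q i) phi (p i) <= phi (\sum_(i | Q i) p i).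
Proof.
move=> p0; rewrite {2}/phi mulr_suml; apply: ler_sum => i Qi.
apply: phi_le => //; rewrite (bigD1 i) //= lerDl; exact: sumr_ge0.
Qed.

Lemma prob_comp (V U : finType) (Y : Omega -> V) (f : V -> U) u :
  prob P (fun w => f (Y w) == u) = \sum_(v | f v == u) prob P (fun w => Y w == v).
Proof.
rewrite /prob (partition_big Y (fun v => f v == u)) /=; last by [].
apply: eq_bigr => v /eqP fv; apply: eq_bigl => w.
by case: (eqVneq (Y w) v) => [->|]; rewrite ?fv ?eqxx ?andbF.
Qed.

Lemma prob_sum (V : finType) (Y : Omega -> V) :
  \sum_(v : V) prob P (fun w => Y w == v) = \sum_w P w.
Proof.
rewrite /prob (exchange_big_dep predT) //=; apply: eq_bigr => w _.
by rewrite (big_pred1 (Y w)) // => v; rewrite eq_sym.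
Qed.

Variable b : nat.
Hypothesis b_gt1 : (1 < b)%N.

Lemma lnb_gt0 : 0 < ln b%:R :> R.
Proof. by apply: ln_gt0; rewrite ltr1n. Qed.

Lemma entropy_comp (V U : finType) (Y : Omega -> V) (Y2 : Omega -> U) (f : V -> U) :
  (forall w, Y2 w = f (Y w)) -> entropy P b Y2 <= entropy P b Y.
Proof.
move=> eY; rewrite !entropyE ler_pM2r ?invr_gt0 ?lnb_gt0 // lerN2.
rewrite (partition_big f predT) //=; apply: ler_sum => u _.
have -> : prob P (fun w => Y2 w == u) = prob P (fun w => f (Y w) == u).
  by rewrite /prob; apply: eq_bigl => w; rewrite eY.
rewrite prob_comp; apply: phi_sum_le => v; exact: prob_ge0.
Qed.

Hypothesis P_sum1 : \sum_w P w = 1.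

Lemma entropy_upper (V : finType) (Y : Omega -> V) :
  entropy P b Y <= ln #|V|%:R / ln b%:R.
Proof.
rewrite entropyE ler_pM2r ?invr_gt0 ?lnb_gt0 //.
have Vn : (0 < #|V|)%N.
  have [w _] : exists w : Omega, true.
    case: (pickP Omega) => [w|e]; first by exists w.
    by move: P_sum1; rewrite big_pred0 // => /eqP; rewrite eq_sym oner_eq0.
  by apply/card_gt0P; exists (Y w).
set n := #|V|%:R : R.
have n_gt0 : 0 < n by rewrite ltr0n.
have key : forall p, 0 <= p -> - phi p - p * ln n <= n^-1 - p.
  move=> p p0; have [->|pp] := eqVneq p 0.
    by rewrite /phi !mul0r !(oppr0, addr0) invr_ge0 ltW.
  have p_gt0 : 0 < p by rewrite lt_def pp.
  have : ln (n * p)^-1 <= (n * p)^-1 - 1.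
    have h := @le_ln1Dx R ((n * p)^-1 - 1).
    rewrite [1 + _]addrC subrK in h; apply: h.
    by rewrite ltrBrDl subrr invr_gt0 mulr_gt0.
  rewrite lnV ?posrE ?mulr_gt0 // lnM ?posrE // => h.
  have := ler_wpM2l (ltW p_gt0) h.
  rewrite mulrBr mulr1 invfM mulrCA mulfV ?mulr1 //.
  move=> h2; apply: le_trans h2; by rewrite /phi mulrN mulrDr opprD addrC.
set pr := fun v => prob P (fun w => Y w == v).
have S : \sum_(v : V) (- phi (pr v) - pr v * ln n) <= \sum_(v : V) (n^-1 - pr v).
  by apply: ler_sum => v _; apply: key; exact: prob_ge0.
move: S; rewrite !sumrB sumrN -mulr_suml prob_sum P_sum1 mul1r sumr_const -mulr_natr (_ : #|xpredT|%:R = n) // mulVf ?gt_eqF // subrr subr_le0.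
by [].
Qed.

Lemma entropy_lower (V : finType) (Y : Omega -> V) (c : R) :
  0 < c -> (forall v, prob P (fun w => Y w == v) <= c) ->
  - ln c / ln b%:R <= entropy P b Y.
Proof.
move=> c0 hc; rewrite entropyE ler_pM2r ?invr_gt0 ?lnb_gt0 // lerN2.
set pr := fun v => prob P (fun w => Y w == v).
have -> : ln c = \sum_v pr v * ln c by rewrite -mulr_suml prob_sum P_sum1 mul1r.
apply: ler_sum => v _; apply: phi_le; [exact: prob_ge0| exact: hc].
Qed.
End Info.


Section Model1.
Variables (R : realType) (F : finFieldType) (L K : nat) (T : finType) (pQ : T -> R).
Hypothesis pQ_ge0 : forall t, 0 <= pQ t.
Hypothesis pQ_sum1 : \sum_t pQ t = 1.
Local Notation Om := (Omega F L K T).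
Local Notation P := (@joint_prob R F L K T pQ).
Local Notation c := (#|{: msgs F L K}|%:R : R).

Lemma c_gt0 : 0 < c.
Proof. by rewrite ltr0n; apply/card_gt0P; exists 0. Qed.

Lemma jp_ge0 o : 0 <= P o.
Proof. by rewrite /joint_prob divr_ge0 // ler0n. Qed.

Lemma sum_pair (G : Om -> R) : \sum_(o : Om) G o = \sum_(w : msgs F L K) \sum_(t : T) G (w, t).
Proof. by rewrite pair_big; apply: eq_bigr => -[]. Qed.

Lemma jp_sum1 : \sum_o P o = 1.
Proof.
rewrite sum_pair /joint_prob /=.
have h : forall w : msgs F L K, \sum_t pQ (w, t).2 / c = c^-1.
  by move=> w /=; rewrite -mulr_suml pQ_sum1 mul1r.
rewrite (eq_bigr _ (fun w _ => h w)).
by rewrite sumr_const -[_ *+ #|xpredT|]mulr_natr mulVf // gt_eqF // c_gt0.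
Qed.

Lemma probQ t : prob P (fun o => Q_of o == t) = pQ t.
Proof.
rewrite /prob big_mkcond sum_pair /=.
rewrite /joint_prob /=.
have h : forall w : msgs F L K, \sum_(t0 : T) (if t0 == t then pQ t0 / c else 0) = pQ t / c.
  by move=> w; rewrite -big_mkcond (big_pred1 t).
by rewrite (eq_bigr _ (fun w _ => h w)) sumr_const -[_ *+ #|xpredT|]mulr_natr divfK // gt_eqF // c_gt0.
Qed.

Lemma probW w : prob P (fun o => W_of o == w) = c^-1.
Proof.
rewrite /prob big_mkcond sum_pair /= (bigD1 w) //= [X in _ + X]big1 ?addr0.
  by rewrite eqxx /joint_prob -mulr_suml pQ_sum1 mul1r.
by move=> w' nw; apply: big1 => t _; rewrite (negbTE nw).
Qed.

Lemma sum_const_c (x : R) : \sum_(w : msgs F L K) x = x * c.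
Proof. by rewrite sumr_const -[_ *+ #|xpredT|]mulr_natr. Qed.

Lemma phi_div (x : R) : 0 <= x -> phi (x / c) = phi x / c - x / c * ln c.
Proof.
move=> x0; have [->|xn] := eqVneq x 0; first by rewrite /phi !mul0r subrr.
have xp : 0 < x by rewrite lt_def xn.
rewrite /phi ln_div ?posrE ?c_gt0 // mulrBr; congr (_ - _).
by rewrite mulrAC.
Qed.

Lemma entropy_id b : entropy P b (fun o : Om => o) = entropy P b (@Q_of F L K T) + entropy P b (@W_of F L K T).
Proof.
rewrite !entropyE.
have e1 : forall o : Om, prob P (fun o' => o' == o) = P o.
  by move=> o; rewrite /prob (big_pred1 o).
under eq_bigr do rewrite e1.
under [X in _ = _ + - X / _]eq_bigr do rewrite probW.
under [X in _ = - X / _ + _]eq_bigr do rewrite probQ.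
rewrite sum_pair /joint_prob /=.
have -> : \sum_(w : msgs F L K) \sum_t phi (pQ t / c)
   = \sum_(w : msgs F L K) (\sum_t phi (pQ t) / c - ln c / c).
  apply: eq_bigr => w _.
  rewrite (eq_bigr _ (fun t _ => phi_div (pQ_ge0 t))).
  rewrite sumrB -mulr_suml -mulr_suml -mulr_suml pQ_sum1 mul1r.
  by rewrite [_^-1 * _]mulrC.
rewrite sum_const_c.
rewrite sum_const_c mulrBl divfK ?gt_eqF ?c_gt0 //.
have -> : phi c^-1 * c = - ln c.
  by rewrite /phi mulrAC mulVf ?gt_eqF ?c_gt0 // mul1r lnV ?posrE ?c_gt0.
rewrite -mulrDl; congr (_ * _).
by rewrite -mulr_suml divfK ?gt_eqF ?c_gt0 // opprD.
Qed.
End Model1.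

Section Model2.
Variables (R : realType) (F : finFieldType) (L K N Nr M : nat) (T : finType) (pQ : T -> R).
Variables (Z : 'I_N -> {set 'I_K}) (Tn : 'I_N -> nat)
    (psi : forall n : 'I_N, msgs F L K -> T -> 'rV[F]_(Tn n)).
Hypotheses (L_gt0 : (0 < L)%N) (K_gt0 : (0 < K)%N) (Nr_gt0 : (0 < Nr)%N) (NrN : (Nr <= N)%N)
  (NK : (N %| K)%N) (eM : M = (K %/ N * (N - Nr + 1))%N).
Hypotheses (pQ_ge0 : forall t, 0 <= pQ t) (pQ_sum1 : \sum_t pQ t = 1).
Hypotheses (ZM : forall n, (#|Z n| <= M)%N) (dep : depends_only_on Z psi)
  (dec : decodable pQ Nr psi).

Lemma exists_t : exists t, 0 < pQ t.
Proof.
case: (pickP (fun t => 0 < pQ t)) => [t tp|h]; first by exists t.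
have : \sum_t pQ t = 0.
  apply: big1 => t _; apply/eqP; rewrite eq_le pQ_ge0 andbT.
  by have := h t; rewrite /= leNgt => ->.
by rewrite pQ_sum1 => /eqP; rewrite oner_eq0.
Qed.

Lemma jp_gt0 (w : msgs F L K) t : 0 < pQ t -> 0 < joint_prob pQ ((w, t) : Omega F L K T).
Proof. by move=> h; rewrite /joint_prob divr_gt0 //= c_gt0. Qed.

Definition Bk (k : 'I_K) : {set 'I_N} := ~: [set n | k \in Z n].

Lemma Bk_lt k : (#|Bk k| < Nr)%N.
Proof.
rewrite ltnNge; apply/negP => hB.
pose s := take Nr (enum (Bk k)).
pose A := [set x in s].
have hA : #|A| = Nr.
  have u : uniq s by rewrite take_uniq ?enum_uniq.
  by rewrite cardsE (card_uniqP u) size_takel // -cardE.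
have AB : forall n, n \in A -> k \notin Z n.
  move=> n; rewrite inE => /mem_take; rewrite mem_enum /Bk !inE //.
have [g hg] := dec hA.
have [t tp] := exists_t.
pose w1 : msgs F L K := [ffun j => if j == k then const_mx 1 else 0].
have e0 := hg ((0 : msgs F L K), t) (jp_gt0 _ tp).
have e1 := hg (w1, t) (jp_gt0 _ tp).
have eargs : (fun n => if n \in A then psi n (0 : msgs F L K) t else 0) =
            (fun n => if n \in A then psi n w1 t else 0).
  apply: functional_extensionality_dep => n; case: ifP => // nA.
  apply: dep => j jZ; rewrite /w1 !ffunE; case: (eqVneq j k) => [ejk|//].
  by move: (AB n nA); rewrite -ejk jZ.
move: e0 e1; rewrite /= eargs => <-.
rewrite /sumW /= [X in _ = X]big1; last by move=> j _; rewrite ffunE.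
rewrite (bigD1 k) //= [X in _ + X]big1 ?addr0 ?ffunE ?eqxx; last first.
  by move=> j /negbTE jk; rewrite ffunE jk.
move/matrixP => /(_ 0 (Ordinal L_gt0)); rewrite !mxE => /eqP.
by rewrite oner_eq0.
Qed.

Lemma double_count :
  (\sum_n #|Z n| = \sum_k #|[set n | k \in Z n]|)%N.
Proof.
have e : forall n, #|Z n| = (\sum_k (k \in Z n))%N.
  by move=> n; rewrite -sum1_card big_mkcond /=; apply: congr_big => // k _; case: (k \in Z n).
under eq_bigr do rewrite e.
rewrite exchange_big /=; apply: congr_big => // k _.
rewrite -sum1_card [RHS]big_mkcond /=; apply: congr_big => // n _; rewrite inE; by case: (k \in Z n).
Qed.

Lemma Bk_card k : #|Bk k| = (Nr - 1)%N.
Proof.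
have hB := Bk_lt k.
suff : (N - Nr + 1 >= #|[set n | k \in Z n]|)%N.
  have := cardsC [set n | k \in Z n]; rewrite card_ord -/(Bk k).
  move: hB; set a := #|Bk k|; set b := #|[set n | k \in Z n]|; lia.
have lo : forall j, (N - Nr + 1 <= #|[set n | j \in Z n]|)%N.
  move=> j; have := cardsC [set n | j \in Z n]; rewrite card_ord -/(Bk j).
  have := Bk_lt j; set a := #|Bk j|; set b := #|[set n | j \in Z n]|; lia.
have up : (\sum_j #|[set n | j \in Z n]| <= N * M)%N.
  rewrite -double_count; apply: (@leq_trans (\sum_(n < N) M)).
    by apply: leq_sum => n _.
  by rewrite sum_nat_const card_ord.
have NM : (N * M = K * (N - Nr + 1))%N by rewrite eM mulnA [(N * _)%N]mulnC divnK.
rewrite (bigD1 k) //= NM in up.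
have : ((K - 1) * (N - Nr + 1) <= \sum_(j | j != k) #|[set n | j \in Z n]|)%N.
  apply: (@leq_trans (\sum_(j | j != k) (N - Nr + 1))); last by apply: leq_sum => j _.
  by rewrite big_const iter_addn_0 cardC1 card_ord mulnC subn1.
move: up; set S := (\sum_(j | j != k) _)%N; set b := #|[set n | k \in Z n]|.
move=> up h; have : (b + (K - 1) * (N - Nr + 1) <= K * (N - Nr + 1))%N.
  by apply: leq_trans up; rewrite leq_add2l.
rewrite -{2}(subnK K_gt0) mulnDl mul1n addnC leq_add2l //.
Qed.

Lemma inj_k t (tp : 0 < pQ t) k n (kn : k \in Z n) (w w' : msgs F L K) :
  (forall j, j != k -> w j = w' j) -> psi n w t = psi n w' t -> w k = w' k.
Proof.
move=> hw hn.
have nB : n \notin Bk k by rewrite /Bk !inE negbK.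
have hA : #|n |: Bk k| = Nr by rewrite cardsU1 nB Bk_card; lia.
have [g hg] := dec hA.
have e0 := hg (w, t) (jp_gt0 _ tp).
have e1 := hg (w', t) (jp_gt0 _ tp).
have eargs : (fun m => if m \in n |: Bk k then psi m w t else 0) =
            (fun m => if m \in n |: Bk k then psi m w' t else 0).
  apply: functional_extensionality_dep => m; case: ifP => // /setU1P [->//|mB].
  apply: dep => j jZ; apply: hw; apply/eqP => ejk.
  by move: mB; rewrite /Bk !inE -ejk jZ.
move: e0 e1; rewrite /= eargs => <-; rewrite /sumW /=.
rewrite (bigD1 k) // [in X in _ = X](bigD1 k) //=.
have -> : \sum_(i < K | i != k) w i = \sum_(i < K | i != k) w' i.
  by apply: eq_bigr => j jk; apply: hw.
by move/addIr.
Qed.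

Lemma new_data_rcons p x : new_data_seq Z (rcons p x) ->
  new_data_seq Z p /\ Z x :\: \bigcup_(j <- p) Z j != set0.
Proof.
move=> h; split; last by apply: (h p [::] x); rewrite cats1.
move=> p0 r y e; apply: (h p0 (rcons r x) y).
by rewrite e rcons_cat rcons_cons.
Qed.

Lemma uniq_seq t (tp : 0 < pQ t) s : new_data_seq Z s ->
  exists Ks : {set 'I_K}, [/\ #|Ks| = size s,
    (forall k, k \in Ks -> exists2 n, n \in s & k \in Z n) &
    forall w w' : msgs F L K, (forall n, n \in s -> psi n w t = psi n w' t) ->
      (forall k, k \notin Ks -> w k = w' k) -> w = w'].
Proof.
elim/last_ind: s => [_|p x IH /new_data_rcons [hp hx]].
  exists set0; split; first by rewrite cards0.
    by move=> k; rewrite inE.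
  by move=> w w' _ h; apply/ffunP => k; apply: h; rewrite inE.
have [Ks [cK memK uK]] := IH hp.
have [kx] := set0Pn _ hx; rewrite inE => /andP [kxU kxZ].
have kxp : forall n, n \in p -> kx \notin Z n.
  move=> n np; apply: contra kxU => kZ; rewrite bigcup_seq.
  by apply/bigcupP; exists n.
have kxK : kx \notin Ks.
  by apply/negP => /memK [n np]; apply/negP; apply: kxp.
exists (kx |: Ks); split.
- by rewrite cardsU1 kxK cK size_rcons.
- move=> k /setU1P [->|kK]; first by exists x; rewrite ?mem_rcons ?inE ?eqxx.
  by have [n np kn] := memK k kK; exists n; rewrite // mem_rcons inE np orbT.
move=> w w' hpsi hK.
pose w2 : msgs F L K := [ffun j => if j == kx then w' kx else w j].
have w2w : w2 = w'.
  apply: uK.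
    move=> n np; rewrite -hpsi ?mem_rcons ?inE ?np ?orbT //.
    apply: dep => j jZ; rewrite /w2 ffunE; case: eqP => // ejk.
    by move: (kxp n np); rewrite -ejk jZ.
  move=> k kK; rewrite /w2 ffunE; case: eqVneq => [->//|kkx].
  by apply: hK; rewrite !inE negb_or kkx.
have ekx : w kx = w' kx.
  rewrite -[in RHS]w2w; apply: (inj_k tp kxZ).
    by move=> j jk; rewrite /w2 ffunE (negbTE jk).
  by rewrite w2w; apply: hpsi; rewrite mem_rcons inE eqxx.
apply/ffunP => j; case: (eqVneq j kx) => [->//|jk].
by rewrite -w2w /w2 ffunE (negbTE jk).
Qed.

Lemma fiber_card t (tp : 0 < pQ t) s (hs : new_data_seq Z s) (Fb : {set msgs F L K}) :
  (forall w w', w \in Fb -> w' \in Fb -> forall n, n \in s -> psi n w t = psi n w' t) ->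
  (#|Fb| * #|{: 'rV[F]_L}| ^ size s <= #|{: msgs F L K}|)%N.
Proof.
move=> hF; have [Ks [cK _ uK]] := uniq_seq tp hs.
pose S' := [set v : msgs F L K | v \in pffun_on (0 : 'rV[F]_L) Ks predT].
have cS : #|S'| = (#|{: 'rV[F]_L}| ^ size s)%N.
  by rewrite cardsE card_pffun_on cK.
have S0 : forall v k, v \in S' -> k \notin Ks -> v k = 0.
  move=> v k; rewrite inE => /pffun_onP [/supportP h _]; exact: h.
pose h (p : msgs F L K * msgs F L K) : msgs F L K :=
  [ffun k => if k \in Ks then p.2 k else p.1 k].
rewrite -cS -cardsX; apply: (@leq_card_in _ _ h).
move=> [w v] [w' v'] /setXP [wF vS] /setXP [wF' vS'] /= e.
have ev : v = v'.
  apply/ffunP => k; case: (boolP (k \in Ks)) => kK.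
    by move/ffunP: e => /(_ k); rewrite !ffunE /= kK.
  by rewrite !S0.
rewrite ev; congr (_, _); apply: uK; first by apply: hF.
move=> k kK; move/ffunP: e => /(_ k); rewrite !ffunE /= (negbTE kK) //.
Qed.

Definition XS (s : seq 'I_N) (o : Omega F L K T) : {dffun forall n : 'I_N, 'rV[F]_(Tn n)} :=
  [ffun n => if n \in s then psi n o.1 o.2 else 0].

Lemma prob_XS s (hs : new_data_seq Z s) x :
  prob (joint_prob pQ) (fun o => XS s o == x) <= ((#|{: 'rV[F]_L}| ^ size s)%N%:R)^-1.
Proof.
set r := ((#|{: 'rV[F]_L}| ^ size s)%N%:R : R).
have r_gt0 : 0 < r.
  have h0 : (0 < #|{: 'rV[F]_L}|)%N by apply/card_gt0P; exists 0.
  by rewrite ltr0n expn_gt0 h0.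
rewrite /prob big_mkcond sum_pair exchange_big /=.
have -> : r^-1 = \sum_t pQ t / r by rewrite -mulr_suml pQ_sum1 mul1r.
apply: ler_sum => t _.
rewrite -big_mkcond /=.
set Fb := [set w : msgs F L K | XS s (w, t) == x].
have -> : \sum_(w | XS s (w, t) == x) joint_prob pQ ((w, t) : Omega F L K T)
    = \sum_(w in Fb) (pQ t / #|{: msgs F L K}|%:R).
  by apply: eq_big => // w; rewrite ?inE.
rewrite sumr_const -[_ *+ #|Fb|]mulr_natr.
have [->|tn] := eqVneq (pQ t) 0; first by rewrite !mul0r.
have tp : 0 < pQ t by rewrite lt_def tn pQ_ge0.
have hc := fiber_card tp hs (Fb := Fb).
have hc' : (#|Fb| * #|{: 'rV[F]_L}| ^ size s <= #|{: msgs F L K}|)%N.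
  apply: hc => w w'; rewrite !inE => /eqP e /eqP e' n ns.
  have := congr1 (fun f : {dffun forall n : 'I_N, 'rV[F]_(Tn n)} => f n) (etrans e (esym e')).
  by rewrite /XS /= !ffunE ns.
rewrite -mulrA ler_wpM2l ?pQ_ge0 // mulrC ler_pdivrMr ?c_gt0 //.
rewrite mulrC ler_pdivlMr // -natrM ler_nat.
exact: hc'.
Qed.
End Model2.

End Helpers.
Import Helpers.

Theorem theorem3 (R : realType) (F : finFieldType) (L K N Nr M : nat)
    (T : finType) (pQ : T -> R)
    (Z : 'I_N -> {set 'I_K}) (Tn : 'I_N -> nat)
    (psi : forall n : 'I_N, msgs F L K -> T -> 'rV[F]_(Tn n))
    (s : seq 'I_N) :
  (0 < L)%N -> (0 < K)%N -> (0 < Nr)%N -> (Nr <= N)%N -> (N %| K)%N ->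
  M = (K %/ N * (N - Nr + 1))%N ->
  (forall t, 0 <= pQ t) -> \sum_(t : T) pQ t = 1 ->
  (forall n, (#|Z n| <= M)%N) ->
  depends_only_on Z psi ->
  decodable pQ Nr psi ->
  secure pQ psi ->
  uniq s -> new_data_seq Z s ->
  randomness_size F L K pQ >= (size s)%:R - 1.
Proof.
move=> L0 K0 Nr0 NrN NK eM pQ0 pQ1 ZM dep dec sec us hs.
pose P := @joint_prob R F L K T pQ.
have P0 : forall o, 0 <= P o by move=> o; exact: jp_ge0.
have P1 : \sum_o P o = 1 by exact: jp_sum1.
have b1 : (1 < #|F|)%N := card_finNzRing_gt1 F.
pose b := #|F|.
pose l : R := ln #|{: 'rV[F]_L}|%:R / ln b%:R.
have lb : 0 < ln b%:R :> R by apply: lnb_gt0.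
have el : l = L%:R.
  rewrite /l card_mx mul1n natrX lnXn ?ltr0n ?(ltn_trans _ b1) //.
  by rewrite -[_ *+ L]mulr_natr mulrAC divff ?gt_eqF // mul1r.
have hXS : l *+ size s <= entropy P b (XS psi s).
  have r0 : (0 < #|{: 'rV[F]_L}|)%N by apply/card_gt0P; exists 0.
  have := entropy_lower P0 b1 P1 (Y := XS psi s) (c := ((#|{: 'rV[F]_L}| ^ size s)%N%:R)^-1).
  rewrite invr_gt0 ltr0n expn_gt0 r0 /= => h.
  have := h isT (prob_XS L0 K0 Nr0 NrN NK eM pQ0 pQ1 ZM dep dec hs).
  rewrite lnV ?posrE ?ltr0n ?expn_gt0 ?r0 // opprK natrX lnXn ?ltr0n //.
  by rewrite /l -mulrnAl.
have hsW : entropy P b (@sumW F L K T) <= l := entropy_upper P0 b1 P1 _.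
have hid := entropy_id F L K pQ0 pQ1 b.
have h1 : entropy P b (fun w => (W_of w, all_X psi w, sumW w)) <= entropy P b (fun o : Omega F L K T => o).
  by apply: (entropy_comp P0 b1 (f := fun w => (W_of w, all_X psi w, sumW w))).
have h2 : entropy P b (@W_of F L K T) <= entropy P b (fun w => (W_of w, sumW w)).
  by apply: (entropy_comp P0 b1 (f := fun p => p.1)).
have h3 : entropy P b (XS psi s) <= entropy P b (fun w => (all_X psi w, sumW w)).
  apply: (entropy_comp P0 b1 (f := fun p : {dffun forall n : 'I_N, 'rV[F]_(Tn n)} * 'rV[F]_L => ([ffun n => if n \in s then p.1 n else 0] : {dffun forall n : 'I_N, 'rV[F]_(Tn n)}))).
  by move=> o; apply/ffunP => n; rewrite /XS !ffunE.
move: sec; rewrite /secure /cond_mutual_info => sec.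
rewrite /randomness_size ler_pdivlMr ?ltr0n // -el mulrBl mul1r mulr_natl.
move: hXS hsW hid h1 h2 h3 sec.
set a := l *+ size s.
move=> *; lra.
Qed.
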